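(* In the setting below, if $\eta \geq \eta_0$ and an oscillation happens at iteration $t$, then $\hat{w}_{t+1} \geq (1+\gamma^2)\hat{w}_t$.
   Context: Dimension $d=2$. Data $x_1,\dots,x_n\in\mathbb{R}^2$ with $\|x_i\|\le 1$, linearly separable (some $w$ has $\langle w,x_i\rangle>0$ for all $i$). $F(w) = \frac{1}{n}\sum_{i=1}^n \log(1+\exp(-\langle w, x_i\rangle))$. Maximum margin $\gamma = \max_{\|w\|=1}\min_i \langle w, x_i\rangle$ with maximizer the unit vector $w_*$; $v_*$ is a fixed unit vector orthogonal to $w_*$. Gradient descent: $w_0=0$, $w_{t+1} = w_t - \eta\nabla F(w_t)$ with constant $\eta>0$. $\hat{w}_t = \langle w_t, w_*\rangle$, $\tilde{w}_t = \langle w_t, v_*\rangle$. $\eta_0 = \max(n, \frac{32}{\gamma^2}\log\frac{256}{\gamma^2})$. $\lambda = \frac{1}{\gamma}\log\frac{1}{\exp(1/(8\eta))-1}$. An oscillation happens at iteration $t\ge 0$ if all of: (1) $\hat{w}_t \geq \lambda$; (2) $F(w_t) > 1/(8\eta)$ and $F(w_{t+1}) > 1/(8\eta)$; (3) $\tilde{w}_{t+1}\tilde{w}_t < 0$. *)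

(* Defs.v *)
From Stdlib Require Import Reals Lra.
Open Scope R_scope.

Definition vec := (R * R)%type.
Definition dot (u v : vec) : R := fst u * fst v + snd u * snd v.
Definition vnorm (u : vec) : R := sqrt (dot u u).
Definition vadd (u v : vec) : vec := (fst u + fst v, snd u + snd v).
Definition vscale (a : R) (u : vec) : vec := (a * fst u, a * snd u).
Definition vzero : vec := (0, 0).

Fixpoint sumR (n : nat) (f : nat -> R) : R :=
  match n with O => 0 | S k => sumR k f + f k end.
Fixpoint vsum (n : nat) (f : nat -> vec) : vec :=
  match n with O => vzero | S k => vadd (vsum k f) (f k) end.

Definition F (n : nat) (x : nat -> vec) (w : vec) : R :=
  / INR n * sumR n (fun i => ln (1 + exp (- dot w (x i)))).

Definition gradF (n : nat) (x : nat -> vec) (w : vec) : vec :=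
  vscale (- / INR n) (vsum n (fun i => vscale (/ (1 + exp (dot w (x i)))) (x i))).

Fixpoint gd (n : nat) (x : nat -> vec) (eta : R) (t : nat) : vec :=
  match t with
  | O => vzero
  | S k => let w := gd n x eta k in vadd w (vscale (- eta) (gradF n x w))
  end.

(* wstar is a unit maximizer of w |-> min_i <w, x_i> over unit vectors,
   and gamma is the maximum value (the maximum margin). *)
Definition is_max_margin (n : nat) (x : nat -> vec) (wstar : vec) (gamma : R) : Prop :=
  vnorm wstar = 1 /\
  (forall i, (i < n)%nat -> gamma <= dot wstar (x i)) /\
  (exists i, (i < n)%nat /\ dot wstar (x i) = gamma) /\
  (forall w, vnorm w = 1 -> exists i, (i < n)%nat /\ dot w (x i) <= gamma).

Definition eta0 (n : nat) (gamma : R) : R :=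
  Rmax (INR n) (32 / gamma ^ 2 * ln (256 / gamma ^ 2)).

Definition lambda (gamma eta : R) : R :=
  / gamma * ln (/ (exp (1 / (8 * eta)) - 1)).

Definition oscillation (n : nat) (x : nat -> vec) (wstar vstar : vec)
    (gamma eta : R) (t : nat) : Prop :=
  let wt := gd n x eta t in
  let wt1 := gd n x eta (S t) in
  dot wt wstar >= lambda gamma eta /\
  (F n x wt > 1 / (8 * eta) /\ F n x wt1 > 1 / (8 * eta)) /\
  dot wt1 vstar * dot wt vstar < 0.

(* Main.v *)
Require Import Defs.
From Stdlib Require Import Reals Lra Lia Psatz Classical.
Open Scope R_scope.

Lemma ln_le' x y : 0 < x -> x <= y -> ln x <= ln y.
Proof. intros Hx Hxy. destruct (Req_dec x y) as [->|Hne]; [lra|].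
  left; apply ln_increasing; lra. Qed.

Lemma ln_le_xm1 x : 0 < x -> ln x <= x - 1.
Proof. intros Hx. pose proof (exp_ineq1_le (ln x)). rewrite exp_ln in H; lra. Qed.

Lemma dot_comm u v : dot u v = dot v u.
Proof. unfold dot; ring. Qed.

Lemma dot_vsum n f y : dot (vsum n f) y = sumR n (fun i => dot (f i) y).
Proof. induction n; simpl; unfold dot, vadd, vzero in *; simpl in *; [ring|].
  rewrite <- IHn. ring. Qed.

Lemma sumR_le n f g : (forall i, (i < n)%nat -> f i <= g i) -> sumR n f <= sumR n g.
Proof. induction n; simpl; intros H; [lra|].
  pose proof (H n (Nat.lt_succ_diag_r n)). assert (sumR n f <= sumR n g) by (apply IHn; intros; apply H; lia). lra. Qed.

Lemma sumR_const n c : sumR n (fun _ => c) = INR n * c.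
Proof. induction n; simpl sumR; [simpl; ring|]. rewrite IHn, S_INR; ring. Qed.

Lemma sumR_abs n f : Rabs (sumR n f) <= sumR n (fun i => Rabs (f i)).
Proof. induction n; simpl; [rewrite Rabs_R0; lra|].
  pose proof (Rabs_triang (sumR n f) (f n)). lra. Qed.

Lemma sumR_ext n f g : (forall i, f i = g i) -> sumR n f = sumR n g.
Proof. intros H; induction n; simpl; [reflexivity|]. rewrite IHn, H; reflexivity. Qed.

Lemma gd_step n x eta k y :
  dot (gd n x eta (S k)) y = dot (gd n x eta k) y +
    eta / INR n * sumR n (fun i => / (1 + exp (dot (gd n x eta k) (x i))) * dot (x i) y).
Proof.
  simpl gd. unfold gradF.
  set (w := gd n x eta k).
  set (f := fun i => vscale (/ (1 + exp (dot w (x i)))) (x i)).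
  assert (E : dot (vadd w (vscale (- eta) (vscale (- / INR n) (vsum n f)))) y
     = dot w y + eta / INR n * dot (vsum n f) y) by (unfold dot, vadd, vscale; simpl; unfold Rdiv; ring).
  rewrite E, dot_vsum. f_equal. f_equal. apply sumR_ext.
  intros i. unfold f, dot, vscale; simpl. ring.
Qed.

Lemma dot_self_le1 u : vnorm u <= 1 -> dot u u <= 1.
Proof. intros H. unfold vnorm in H.
  assert (0 <= dot u u) by (unfold dot; nra).
  pose proof (sqrt_sqrt _ H0). pose proof (sqrt_pos (dot u u)). nra. Qed.

Lemma dot_self_eq1 u : vnorm u = 1 -> dot u u = 1.
Proof. intros H. unfold vnorm in H.
  assert (0 <= dot u u) by (unfold dot; nra).
  pose proof (sqrt_sqrt _ H0). rewrite H in H1. lra. Qed.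

Lemma cs1 u v : dot u u <= 1 -> dot v v = 1 -> Rabs (dot u v) <= 1.
Proof. destruct u as [a b], v as [c d]; unfold dot; simpl; intros H1 H2.
  assert (L : (a*c+b*d)^2 + (a*d-b*c)^2 = (a*a+b*b)*(c*c+d*d)) by ring.
  assert ((a*c+b*d)^2 <= 1).
  { rewrite H2 in L. pose proof (pow2_ge_0 (a*d-b*c)). lra. }
  apply Rabs_le; nra. Qed.

Lemma decomp w y e f : dot e e = 1 -> dot f f = 1 -> dot e f = 0 ->
  dot w y = dot w e * dot y e + dot w f * dot y f.
Proof. destruct w as [w1 w2], y as [y1 y2], e as [e1 e2], f as [f1 f2]; unfold dot; simpl.
  intros H1 H2 H3.
  assert (A : e1*e1 + f1*f1 = 1 /\ e2*e2+f2*f2 = 1 /\ e1*e2+f1*f2 = 0).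
  { assert (F1 : f1 + (e1*f2 - e2*f1) * e2 = - f1*(e1*e1+e2*e2-1) + e1*(e1*f1+e2*f2)) by ring.
    assert (F2 : f2 - (e1*f2 - e2*f1) * e1 = - f2*(e1*e1+e2*e2-1) + e2*(e1*f1+e2*f2)) by ring.
    assert (Hd : (e1*f2 - e2*f1)*(e1*f2 - e2*f1) = (e1*e1+e2*e2)*(f1*f1+f2*f2) - (e1*f1+e2*f2)*(e1*f1+e2*f2)) by ring.
    rewrite H1, H3 in F1, F2. rewrite H1, H2, H3 in Hd.
    assert (F1' : f1 = - (e1*f2 - e2*f1) * e2) by lra.
    assert (F2' : f2 = (e1*f2 - e2*f1) * e1) by lra. clear F1 F2.
    remember (e1*f2 - e2*f1) as d.
    assert (Hd1 : d*d = 1) by lra.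
    rewrite F1', F2'. split; [|split].
    - replace (e1 * e1 + - d * e2 * (- d * e2)) with (e1*e1 + (d*d)*(e2*e2)) by ring. rewrite Hd1; lra.
    - replace (e2 * e2 + d * e1 * (d * e1)) with (e2*e2 + (d*d)*(e1*e1)) by ring. rewrite Hd1; lra.
    - replace (e1 * e2 + - d * e2 * (d * e1)) with (e1*e2*(1 - d*d)) by ring. rewrite Hd1; ring. }
  destruct A as [A1 [A2 A3]].
  replace ((w1 * e1 + w2 * e2) * (y1 * e1 + y2 * e2) + (w1 * f1 + w2 * f2) * (y1 * f1 + y2 * f2))
    with (w1*y1*(e1*e1+f1*f1) + w2*y2*(e2*e2+f2*f2) + (w1*y2+w2*y1)*(e1*e2+f1*f2)) by ring.
  rewrite A1, A2, A3. ring. Qed.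

Definition cc eta := - ln (exp (1 / (8 * eta)) - 1).

Lemma loss_big n x w eta : 0 < eta -> F n x w > 1 / (8 * eta) ->
  exists i, (i < n)%nat /\ dot w (x i) < cc eta.
Proof.
  intros He HF. destruct (classic (exists i, (i < n)%nat /\ dot w (x i) < cc eta)) as [H|H]; auto.
  exfalso.
  assert (Hall : forall i, (i < n)%nat -> ln (1 + exp (- dot w (x i))) <= 1 / (8 * eta)).
  { intros i Hi. assert (Hz : cc eta <= dot w (x i)).
    { destruct (Rle_lt_dec (cc eta) (dot w (x i))); auto. exfalso; apply H; eauto. }
    assert (Hpos : 0 < exp (1 / (8 * eta)) - 1).
    { pose proof (exp_ineq1_le (1/(8*eta))). assert (0 < 1/(8*eta)) by (apply Rdiv_lt_0_compat; lra). 
      pose proof (exp_increasing 0 (1/(8*eta)) H1). rewrite exp_0 in H2. lra. }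
    assert (exp (- dot w (x i)) <= exp (1 / (8 * eta)) - 1).
    { rewrite <- (exp_ln _ Hpos). destruct (Req_dec (dot w (x i)) (cc eta)) as [E|E].
      - rewrite E; unfold cc. rewrite Ropp_involutive. lra.
      - left; apply exp_increasing. unfold cc in *. lra. }
    rewrite <- (ln_exp (1/(8*eta))). apply ln_le'.
    pose proof (exp_pos (- dot w (x i))); lra. lra. }
  unfold F in HF.
  destruct n as [|m].
  - simpl in HF. assert (0 < 1/(8*eta)) by (apply Rdiv_lt_0_compat; lra). lra.
  - pose proof (sumR_le (S m) _ _ Hall). rewrite sumR_const in H0.
    assert (0 < INR (S m)) by (apply lt_0_INR; lia).
    assert (/ INR (S m) * sumR (S m) (fun i => ln (1 + exp (- dot w (x i)))) <= 1/(8*eta)).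
    { apply Rmult_le_reg_l with (INR (S m)); auto. rewrite <- Rmult_assoc, Rinv_r by lra. lra. }
    lra.
Qed.
Ltac fsolve := field; repeat split; try (intro; lra); try lra.

Lemma cc_le eta : 0 < eta -> cc eta <= ln (8 * eta).
Proof. intros He. unfold cc.
  assert (Hq : 0 < 1 / (8 * eta)) by (apply Rdiv_lt_0_compat; lra).
  pose proof (exp_ineq1_le (1/(8*eta))).
  assert (Hp : 0 < exp (1/(8*eta)) - 1) by lra.
  rewrite <- ln_Rinv by exact Hp. apply ln_le'. apply Rinv_0_lt_compat; exact Hp.
  apply Rle_trans with (/ (1/(8*eta))).
  apply Rinv_le_contravar; lra. right; fsolve.
Qed.

Lemma numeric gamma eta : 0 < gamma -> gamma <= 1 -> 0 < eta ->
  eta >= 32 / gamma ^ 2 * ln (256 / gamma ^ 2) -> 4 * ln (8 * eta) <= eta * gamma ^ 2.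
Proof. intros Hg Hg1 He H.
  set (K := eta * gamma ^ 2).
  assert (Hg2 : 0 < gamma ^ 2) by (apply pow_lt; lra).
  assert (Hg21 : gamma ^ 2 <= 1) by (replace (gamma^2) with (gamma*gamma) by ring; nra).
  assert (HK : 0 < K) by (unfold K; nra).
  assert (E : 8 * eta = (K / 8) * (64 / gamma ^ 2)) by (unfold K; fsolve).
  assert (H64 : 1 <= 64 / gamma ^ 2).
  { apply Rmult_le_reg_r with (gamma^2); auto. unfold Rdiv. rewrite Rmult_assoc, Rinv_l by lra. lra. }
  assert (L0 : 0 <= ln (64 / gamma ^ 2)) by (rewrite <- ln_1; apply ln_le'; lra).
  assert (L1 : ln (64 / gamma ^ 2) <= ln (256 / gamma ^ 2)).
  { apply ln_le'; [lra|]. unfold Rdiv. apply Rmult_le_compat_r; [left; apply Rinv_0_lt_compat; lra| lra]. }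
  assert (HK2 : 32 * ln (256 / gamma ^ 2) <= K).
  { unfold K. apply Rmult_le_reg_r with (/ gamma ^2). apply Rinv_0_lt_compat; lra.
    replace (eta * gamma ^ 2 * / gamma ^ 2) with eta by (fsolve).
    replace (32 * ln (256 / gamma ^ 2) * / gamma ^ 2) with (32 / gamma ^ 2 * ln (256 / gamma ^ 2)) by (fsolve).
    lra. }
  rewrite E, ln_mult by lra.
  pose proof (ln_le_xm1 (K/8) ltac:(lra)).
  fold K. lra.
Qed.

Lemma Rabs_le_inv' a b : Rabs a <= b -> - b <= a <= b.
Proof. unfold Rabs; destruct (Rcase_abs a); lra. Qed.
Lemma abs_bnd a : - Rabs a <= a <= Rabs a.
Proof. unfold Rabs; destruct (Rcase_abs a); lra. Qed.

Lemma sumR_scale n c f : sumR n (fun i => c * f i) = c * sumR n f.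
Proof. induction n; simpl; [ring|]. rewrite IHn. ring. Qed.

Theorem lemma3 (n : nat) (x : nat -> vec) (wstar vstar : vec) (gamma eta : R) (t : nat) :
  (0 < n)%nat ->
  (forall i, (i < n)%nat -> vnorm (x i) <= 1) ->
  (exists w, forall i, (i < n)%nat -> 0 < dot w (x i)) ->
  is_max_margin n x wstar gamma ->
  vnorm vstar = 1 -> dot wstar vstar = 0 ->
  0 < eta -> eta >= eta0 n gamma ->
  oscillation n x wstar vstar gamma eta t ->
  dot (gd n x eta (S t)) wstar >= (1 + gamma ^ 2) * dot (gd n x eta t) wstar.
Proof.
  intros Hn Hx [w0 Hw0] [Hws [Hge [[i0 [Hi0 Hi0e]] Hmax]]] Hvs Hwv He Heta Hosc.
  apply dot_self_eq1 in Hws. apply dot_self_eq1 in Hvs.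
  assert (Hnpos : 0 < INR n) by (apply lt_0_INR; lia).
  assert (Hg1 : gamma <= 1).
  { pose proof (cs1 (x i0) wstar (dot_self_le1 _ (Hx i0 Hi0)) Hws).
    rewrite dot_comm, Hi0e in H. apply Rabs_le_inv' in H. lra. }
  assert (Hg0 : 0 < gamma).
  { pose proof (Hw0 0%nat Hn) as H0.
    assert (Hww : 0 < dot w0 w0).
    { destruct w0 as [a b]. unfold dot in *; simpl in *.
      destruct (Req_dec a 0); destruct (Req_dec b 0); nra. }
    set (r := vnorm w0).
    assert (Hr : r * r = dot w0 w0) by (apply sqrt_sqrt; lra).
    assert (Hr0 : 0 < r) by (unfold r, vnorm; apply sqrt_lt_R0; lra).
    destruct (Hmax (vscale (/ r) w0)) as [i [Hi Hle]].
    { unfold vnorm. replace (dot (vscale (/ r) w0) (vscale (/ r) w0)) with 1. apply sqrt_1.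
      replace (dot (vscale (/ r) w0) (vscale (/ r) w0)) with (/r * /r * dot w0 w0) by (unfold dot, vscale; simpl; ring).
      rewrite <- Hr. field. lra. }
    assert (dot (vscale (/ r) w0) (x i) = / r * dot w0 (x i)) by (unfold dot, vscale; simpl; ring).
    pose proof (Hw0 i Hi). assert (0 < / r * dot w0 (x i)) by (apply Rmult_lt_0_compat; auto; apply Rinv_0_lt_compat; lra).
    lra. }
  assert (Ha : forall i, (i < n)%nat -> gamma <= dot (x i) wstar).
  { intros i Hi. rewrite dot_comm. auto. }
  assert (Hb : forall i, (i < n)%nat -> Rabs (dot (x i) vstar) <= 1).
  { intros i Hi. apply cs1; auto. apply dot_self_le1; auto. }
  assert (Hsig : forall z, 0 < / (1 + exp z)).
  { intros z. apply Rinv_0_lt_compat. pose proof (exp_pos z). lra. }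
  assert (Hcoef : 0 < eta / INR n) by (apply Rdiv_lt_0_compat; lra).
  assert (Hmono : forall k, dot (gd n x eta k) wstar <= dot (gd n x eta (S k)) wstar).
  { intros k. rewrite gd_step.
    assert (0 <= sumR n (fun i => / (1 + exp (dot (gd n x eta k) (x i))) * dot (x i) wstar)).
    { rewrite <- (Rmult_0_r (INR n)), <- sumR_const. apply sumR_le. intros i Hi.
      pose proof (Hsig (dot (gd n x eta k) (x i))). pose proof (Ha i Hi). nra. }
    nra. }
  assert (Hw1 : eta * gamma / 2 <= dot (gd n x eta 1) wstar).
  { rewrite gd_step. simpl gd.
    assert (INR n * (/2 * gamma) <= sumR n (fun i => / (1 + exp (dot vzero (x i))) * dot (x i) wstar)).
    { rewrite <- sumR_const. apply sumR_le. intros i Hi.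
      replace (dot vzero (x i)) with 0 by (unfold dot, vzero; simpl; ring).
      rewrite exp_0. pose proof (Ha i Hi). lra. }
    replace (dot vzero wstar) with 0 by (unfold dot, vzero; simpl; ring).
    apply Rle_trans with (eta / INR n * (INR n * (/ 2 * gamma))).
    right; field; lra. nra. }
  assert (Hwk : forall k, eta * gamma / 2 <= dot (gd n x eta (S k)) wstar).
  { induction k. exact Hw1. pose proof (Hmono (S k)). lra. }
  destruct t as [|k].
  { destruct Hosc as [_ [_ H3]]. simpl gd in H3 at 2.
    replace (dot vzero vstar) with 0 in H3 by (unfold dot, vzero; simpl; ring). lra. }
  destruct Hosc as [_ [[HF1 HF2] H3]].
  cbv zeta in HF1, HF2, H3.
  set (w := gd n x eta (S k)) in *.
  set (w' := gd n x eta (S (S k))) in *.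
  assert (Ep : dot w' wstar = dot w wstar + eta / INR n * sumR n (fun i => / (1 + exp (dot w (x i))) * dot (x i) wstar)) by apply gd_step.
  assert (Eu : dot w' vstar = dot w vstar + eta / INR n * sumR n (fun i => / (1 + exp (dot w (x i))) * dot (x i) vstar)) by apply gd_step.
  set (Sg := sumR n (fun i => / (1 + exp (dot w (x i))))).
  set (Sa := sumR n (fun i => / (1 + exp (dot w (x i))) * dot (x i) wstar)) in *.
  set (Sb := sumR n (fun i => / (1 + exp (dot w (x i))) * dot (x i) vstar)) in *.
  assert (HSa : gamma * Sg <= Sa).
  { unfold Sg, Sa. apply Rle_trans with (sumR n (fun i => gamma * / (1 + exp (dot w (x i))))).
    - right. rewrite sumR_scale. reflexivity.
    - apply sumR_le. intros i Hi. pose proof (Hsig (dot w (x i))). pose proof (Ha i Hi). nra. }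
  assert (HSb : Rabs Sb <= Sg).
  { eapply Rle_trans. apply sumR_abs. apply sumR_le. intros i Hi.
    rewrite Rabs_mult. rewrite Rabs_right by (left; apply Hsig).
    pose proof (Hsig (dot w (x i))). pose proof (Hb i Hi). nra. }
  set (p := dot w wstar) in *. set (u := dot w vstar) in *.
  set (p' := dot w' wstar) in *. set (u' := dot w' vstar) in *.
  assert (Hp : eta * gamma / 2 <= p) by apply Hwk.
  assert (Hpp : p <= p') by (unfold p, p', w'; apply Hmono).
  assert (Hdec : forall v, dot v v = dot v v -> forall i, dot v (x i) = dot v wstar * dot (x i) wstar + dot v vstar * dot (x i) vstar).
  { intros v _ i. apply decomp; auto. }
  destruct (loss_big n x w eta He HF1) as [i [Hi Hzi]].
  destruct (loss_big n x w' eta He HF2) as [j [Hj Hzj]].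
  rewrite (Hdec w eq_refl) in Hzi. rewrite (Hdec w' eq_refl) in Hzj. fold p u p' u' in Hzi, Hzj.
  assert (B1 : gamma * p - Rabs u < cc eta).
  { pose proof (Ha i Hi). pose proof (Hb i Hi).
    assert (- Rabs u <= u * dot (x i) vstar).
    { pose proof (Rabs_mult u (dot (x i) vstar)). pose proof (abs_bnd (u * dot (x i) vstar)).
      pose proof (Rabs_pos u). nra. }
    assert (0 <= p) by nra. nra. }
  assert (B2 : gamma * p' - Rabs u' < cc eta).
  { pose proof (Ha j Hj). pose proof (Hb j Hj).
    assert (- Rabs u' <= u' * dot (x j) vstar).
    { pose proof (Rabs_mult u' (dot (x j) vstar)). pose proof (abs_bnd (u' * dot (x j) vstar)).
      pose proof (Rabs_pos u'). nra. }
    assert (0 <= p') by nra. nra. }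
  assert (Hsum : Rabs u + Rabs u' <= eta / INR n * Sg).
  { assert (Rabs u + Rabs u' = Rabs (u' - u)).
    { destruct (Rlt_le_dec u 0); destruct (Rlt_le_dec u' 0).
      - nra.
      - rewrite (Rabs_left u), (Rabs_right u'), (Rabs_right (u'-u)); lra.
      - rewrite (Rabs_right u), (Rabs_left u'), (Rabs_left (u'-u)); try lra; nra.
      - nra. }
    rewrite H. replace (u' - u) with (eta / INR n * Sb) by lra.
    rewrite Rabs_mult, (Rabs_right (eta / INR n)) by lra.
    apply Rmult_le_compat_l; lra. }
  pose proof (cc_le eta He).
  pose proof (numeric gamma eta Hg0 Hg1 He (Rge_trans _ _ _ Heta (Rle_ge _ _ (Rmax_r _ _)))).
  assert (Hgp : 2 * cc eta <= gamma * p).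
  { assert (eta * gamma ^ 2 / 2 <= gamma * p).
    { apply Rle_trans with (gamma * (eta * gamma / 2)). right; simpl; field. apply Rmult_le_compat_l; lra. }
    lra. }
  assert (HD : gamma * (eta / INR n * Sg) <= p' - p).
  { rewrite Ep. replace (p + eta / INR n * Sa - p) with (eta / INR n * Sa) by ring.
    replace (gamma * (eta / INR n * Sg)) with (eta / INR n * (gamma * Sg)) by ring.
    apply Rmult_le_compat_l; lra. }
  assert (gamma * (2 * gamma * p - 2 * cc eta) <= p' - p).
  { apply Rle_trans with (gamma * (eta / INR n * Sg)); auto. assert (gamma * p <= gamma * p') by (apply Rmult_le_compat_l; lra). apply Rmult_le_compat_l; lra. }
  replace (gamma ^ 2) with (gamma * gamma) by ring.
  nra.
Qed.
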